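(* Let $X$ be a set of reals. Then $B(X)$ satisfies $S_{1}(\mathcal{D},\mathcal{D})$ if and only if $X$ satisfies $S_{1}(B_\Omega, B_\Omega)$.
   Context: $B(X)$ is the set of all real-valued Borel functions on $X$ with the topology of pointwise convergence. $S_1(\mathcal{A},\mathcal{B})$ means: for every sequence $(A_n:n\in\mathbb{N})$ of elements of $\mathcal{A}$ there are $b_n\in A_n$ with $\{b_n:n\in\mathbb{N}\}\in\mathcal{B}$. For the space $B(X)$, $\mathcal{D}$ is the family of all countable dense subsets of $B(X)$. A cover $\mathcal{U}$ of $X$ is an $\omega$-cover if $X\notin\mathcal{U}$ and every finite subset of $X$ is contained in some member of $\mathcal{U}$; $B_\Omega$ is the family of all countable $\omega$-covers of $X$ consisting of Borel sets. *)

(* Defs.v *)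
From HB Require Import structures.
From mathcomp Require Import all_boot all_order all_algebra.
From mathcomp Require Import all_classical all_reals all_analysis.
Unset Strict Implicit. Unset Printing Implicit Defensive.
Import Order.TTheory GRing.Theory Num.Theory numFieldNormedType.Exports.
Local Open Scope classical_set_scope.
Local Open Scope ring_scope.

Definition S1 {T : Type} (A B : set (set T)) : Prop :=
  forall s : nat -> set T, (forall n, A (s n)) ->
  exists b : nat -> T, (forall n, s n (b n)) /\ B (range b).

Definition pts {R : realType} (X : set R) : Type := {x : R | X x}.

Definition borelR {R : realType} : set (set R) := <<s [set U : set R | open U] >>.

(* Borel subsets of X (with the subspace topology): traces B \cap X of Borel
   sets B of R, viewed as subsets of the type pts X. *)
Definition borelX {R : realType} (X : set R) : set (set (pts X)) :=
  [set A | exists2 B, borelR B & A = (fun x : pts X => B (proj1_sig x))].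

Definition BX {R : realType} (X : set R) : set {ptws pts X -> R} :=
  [set f | forall U : set R, open U -> borelX X (f @^-1` U)].

Definition DX {R : realType} (X : set R) : set (set {ptws pts X -> R}) :=
  [set D | [/\ D `<=` BX X, countable D &
     forall W : set {ptws pts X -> R}, open W ->
       W `&` BX X !=set0 -> W `&` D !=set0]].

Definition omega_cover {T : Type} (U : set (set T)) : Prop :=
  [/\ \bigcup_(A in U) A = setT, ~ U setT &
      forall F : set T, finite_set F -> exists2 A, U A & F `<=` A].

Definition BOmega {R : realType} (X : set R) : set (set (set (pts X))) :=
  [set U | [/\ omega_cover U, countable U & U `<=` borelX X]].

(* Main.v *)
Require Import Defs.
From HB Require Import structures.
From mathcomp Require Import all_boot all_order all_algebra.
From mathcomp Require Import all_classical all_reals all_analysis.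
Import Order.TTheory GRing.Theory Num.Theory numFieldNormedType.Exports.
Local Open Scope classical_set_scope.
Local Open Scope ring_scope.
Set Implicit Arguments.


Lemma fin_ind T (Q : set T -> Prop) : Q set0 ->
  (forall F x, finite_set F -> Q F -> Q (x |` F)) ->
  forall F, finite_set F -> Q F.
Proof.
move=> Q0 QS F /finite_set_leP [n] /pfcard_geP [->//|/surjfunPex [f ->]].
elim: n => [|n IH].
  by rewrite II0 image_set0.
have -> : f @` `I_n.+1 = f n |` f @` `I_n.
  apply/seteqP; split.
    move=> _ [k /= kn <-]; rewrite ltnS leq_eqVlt in kn.
    case/orP: kn => [/eqP ->|kn]; [by left | by right; exists k].
  move=> _ [-> | [k /= kn <-]]; first by exists n => /=.
  by exists k => //=; apply: ltnW.
apply: QS => //; exact: finite_image.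
Qed.


Section Top.
Variable (R : realType) (P : Type).
Local Notation FT := {ptws P -> R}.

Definition box (f : FT) (F : set P) (e : R) : set FT :=
  [set g | forall x, F x -> `|g x - f x| < e].

Lemma box_filter (f : FT) :
  Filter (filter_from [set p : set P * R | finite_set p.1 /\ 0 < p.2]
    (fun p => box f p.1 p.2)).
Proof.
apply: filter_from_filter; first by exists (set0, 1) => /=.
move=> [F1 e1] [F2 e2] /= [fF1 e1p] [fF2 e2p].
exists (F1 `|` F2, Num.min e1 e2) => /=.
  by split; [rewrite finite_setU; split | rewrite lt_min e1p e2p].
move=> g /= Hg; split => x Fx.
  by apply: (lt_le_trans (Hg x _)); [left | rewrite ge_min lexx].
by apply: (lt_le_trans (Hg x _)); [right | rewrite ge_min lexx orbT].
Qed.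

Lemma open_box (W : set FT) (f : FT) : open W -> W f ->
  exists F e, [/\ finite_set F, 0 < e & box f F e `<=` W].
Proof.
move=> oW Wf.
pose G := filter_from [set p : set P * R | finite_set p.1 /\ 0 < p.2]
    (fun p => box f p.1 p.2).
have FG : Filter G := box_filter f.
have : G --> f.
  apply/cvg_sup => i.
  apply/cvg_image.
    by apply/seteqP; split => // y _; exists (fun _ => y).
  move=> A /= /nbhs_ballP [e /= e0 eA].
  exists ((fun g : FT => g i) @^-1` A).
    exists ([set i], e).
      by rewrite /=; split => //; exact: finite_set1.
    move=> g gb; apply: eA; rewrite /ball /= distrC; exact: gb.
  apply/seteqP; split; first by move=> _ [g gb <-].
  by move=> y Ay; exists (fun _ => y).
move=> Gf.
have : G W by apply: Gf; apply: open_nbhs_nbhs.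
move=> -[[F e] /= [fF e0] sW].
by exists F, e.
Qed.

Lemma eval_nbhs (g : FT) i (O : set R) : nbhs (g i) O ->
  nbhs g ((fun h : FT => h i) @^-1` O).
Proof.
move=> Og.
have : nbhs g --> g by apply: cvg_id.
move/cvg_sup => /(_ i) /cvg_image.
have surj : range (fun h : FT => h i) = setT.
  by apply/seteqP; split => // y _; exists (fun _ => y).
move=> /(_ surj) /(_ O Og) /= [A nA AO].
apply: filterS nA => h Ah /=; rewrite -AO; by exists h.
Qed.

Lemma box_open (f : FT) F e : finite_set F -> open (box f F e).
Proof.
move=> fF; rewrite openE => g gb.
have : forall F', finite_set F' -> F' `<=` F -> nbhs g (box f F' e).
  apply: (@fin_ind _ (fun F' => F' `<=` F -> nbhs g (box f F' e))) => //.
  - by move=> _; apply: filterS filterT => h _ x.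
  - move=> F' x _ IH sF.
    have : nbhs g (box f F' e) by apply: IH => y Fy; apply: sF; right.
    have : nbhs g ((fun h : FT => h x) @^-1` (ball (f x) e)).
      apply: eval_nbhs; apply: open_nbhs_nbhs; split; first exact: ball_open.
      rewrite /ball /= distrC; apply: gb; apply: sF; by left.
    move=> N1 N2; apply: filterS (filterI N1 N2) => h [h1 h2] y [->|Fy].
      by move: h1; rewrite /ball /= distrC.
    exact: h2.
by move=> H; apply: (H F fF (subset_refl _)).
Qed.
End Top.
Arguments box {R P}.
Arguments box_open {R P} f {F} e.



Section Bor.
Variable (R : realType).

Lemma bR_open (A : set R) : open A -> borelR A.
Proof. by move=> oA; apply: sub_sigma_algebra. Qed.

Lemma bR0 : borelR (set0 : set R).
Proof. exact: sigma_algebra0. Qed.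

Lemma bRC (A : set R) : borelR A -> borelR (~` A).
Proof. by move=> bA; rewrite -setTD; apply: sigma_algebraCD. Qed.

Lemma bRT : borelR (setT : set R).
Proof. by rewrite -setC0; apply: bRC; exact: bR0. Qed.

Lemma bR_bigcup (A : nat -> set R) : (forall i, borelR (A i)) -> borelR (\bigcup_i A i).
Proof. exact: sigma_algebra_bigcup. Qed.

Lemma bRU (A B : set R) : borelR A -> borelR B -> borelR (A `|` B).
Proof.
move=> bA bB.
have -> : A `|` B = \bigcup_i (if i == 0%N then A else B).
  apply/seteqP; split.
    by move=> x [Ax|Bx]; [exists 0%N | exists 1%N].
  by move=> x [i _]; case: (i == 0%N) => ?; [left|right].
by apply: bR_bigcup => i; case: (i == 0%N).
Qed.

Lemma bRI (A B : set R) : borelR A -> borelR B -> borelR (A `&` B).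
Proof.
move=> bA bB; rewrite -[A `&` B]setCK setCI.
by apply: bRC; apply: bRU; apply: bRC.
Qed.

Lemma bR_cst (Q : Prop) : borelR (fun _ : R => Q).
Proof.
have [q|nq] := pselect Q.
  have -> : (fun _ : R => Q) = setT by apply/seteqP; split.
  exact: bRT.
have -> : (fun _ : R => Q) = set0 by apply/seteqP; split.
exact: bR0.
Qed.

Variable (X : set R).
Local Notation P := (pts X).

Lemma bX_pre (B : set R) : borelR B -> borelX X (fun x : P => B (proj1_sig x)).
Proof. by move=> bB; exists B. Qed.

Lemma bXC (A : set P) : borelX X A -> borelX X (~` A).
Proof. by move=> [B bB ->]; exists (~` B) => //; exact: bRC. Qed.

Lemma bXU (A B : set P) : borelX X A -> borelX X B -> borelX X (A `|` B).
Proof. by move=> [A' bA ->] [B' bB ->]; exists (A' `|` B') => //; exact: bRU. Qed.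

Lemma bXI (A B : set P) : borelX X A -> borelX X B -> borelX X (A `&` B).
Proof. by move=> [A' bA ->] [B' bB ->]; exists (A' `&` B') => //; exact: bRI. Qed.

Lemma bX_cst (Q : Prop) : borelX X (fun _ : P => Q).
Proof. by exists (fun _ => Q) => //; exact: bR_cst. Qed.

Lemma bX_bigcup (A : nat -> set P) : (forall i, borelX X (A i)) ->
  borelX X (\bigcup_i A i).
Proof.
move=> bA.
have H : forall i, exists B, borelR B /\ A i = (fun x : P => B (proj1_sig x)).
  by move=> i; case: (bA i) => B ? ?; exists B.
have [B HB] := choice H.
exists (\bigcup_i B i).
  by apply: bR_bigcup => i; case: (HB i).
apply/seteqP; split => x [i _ Ax]; exists i => //.
  move: Ax; case: (HB i) => _ E. rewrite E. done.
case: (HB i) => _ E. rewrite E. done.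
Qed.

Lemma bX_bigcup_rat (A : rat -> set P) : (forall q, borelX X (A q)) ->
  borelX X (\bigcup_q A q).
Proof.
move=> bA.
pose B i := match @unpickle rat i with Some q => A q | None => set0 end.
have -> : \bigcup_q A q = \bigcup_i B i.
  apply/seteqP; split.
    move=> x [q _ Ax]; exists (pickle q); first done. rewrite /B (pickleK q). exact: Ax.
  move=> x [i _]; rewrite /B. case: (unpickle i) => [q Ax|]. by exists q. done.
apply: bX_bigcup => i; rewrite /B. case: (unpickle i) => [q|]. exact: bA.
have -> : (set0 : set P) = (fun _ => False) by [].
exact: bX_cst.
Qed.

Lemma BX_pre (f : {ptws P -> R}) (U : set R) : BX X f -> open U ->
  borelX X (f @^-1` U).
Proof. by move=> bf oU; apply: bf. Qed.

Lemma BX_lt (f h : {ptws P -> R}) r : BX X f -> BX X h ->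
  borelX X [set x | f x - h x < r].
Proof.
move=> bf bh.
have -> : [set x | f x - h x < r] = \bigcup_q
   (f @^-1` [set y | y < ratr q] `&` h @^-1` [set y | ratr q - r < y]).
  apply/seteqP; split.
    move=> x /= H.
    have : f x < h x + r by rewrite -ltrBlDl.
    move=> /rat_in_itvoo [q]; rewrite in_itv /= => /andP [q1 q2].
    by exists q => //; split => //=; rewrite ltrBlDr.
  move=> x [q _ [/= q1 q2]].
  rewrite ltrBlDl; apply: (lt_trans q1); by rewrite -ltrBlDr.
apply: bX_bigcup_rat => q; apply: bXI; apply: BX_pre => //.
Qed.

Lemma BX_abs (f h : {ptws P -> R}) r : BX X f -> BX X h ->
  borelX X [set x | `|f x - h x| < r].
Proof.
move=> bf bh.
have -> : [set x | `|f x - h x| < r] =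
   [set x | f x - h x < r] `&` [set x | h x - f x < r].
  apply/seteqP; split => x /=.
    by rewrite ltr_norml => /andP [H1 H2]; split => //; rewrite -opprB ltrNl.
  by move=> [H1 H2]; rewrite ltr_norml H1 andbT ltrNl opprB.
by apply: bXI; apply: BX_lt.
Qed.

Lemma BX_cst (c : R) : BX X (fun _ => c).
Proof. by move=> U oU; apply: bX_cst. Qed.

End Bor.

Section Main.
Variables (R : realType) (X : set R).
Local Notation P := (pts X).
Local Notation FT := {ptws pts X -> R}.

Lemma DXP (D : set FT) : DX X D <-> [/\ D `<=` BX X, countable D &
  forall f, BX X f -> forall F e, finite_set F -> 0 < e ->
    exists2 d, D d & box f F e d].
Proof.
split.
  move=> [DB cD Hd]; split => // f bf F e fF e0.
  have [|d [bd Dd]] := Hd (box f F e) (box_open f e fF).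
    exists f; split => // x _; by rewrite subrr normr0.
  by exists d.
move=> [DB cD Hd]; split => // W oW [f [Wf bf]].
have [F [e [fF e0 sW]]] := open_box f oW Wf.
have [d Dd bd] := Hd f bf F e fF e0.
by exists d; split => //; apply: sW.
Qed.

Lemma DX_nonempty D : DX X D -> exists d, D d.
Proof.
case=> _ _ H; have [] := H setT openT.
  by exists (fun _ => 0); split => //; exact: BX_cst.
by move=> d [_ Dd]; exists d.
Qed.

Lemma DX_enum D : DX X D -> exists h : nat -> FT,
  (forall m, D (h m)) /\ (forall d, D d -> exists m, h m = d).
Proof.
move=> DD; have [d0 Dd0] := DX_nonempty DD.
case: DD => _ cD _.
move/pfcard_geP: cD => [D0|/surjfunPex [h Dh]].
  by rewrite D0 in Dd0.
exists h; split.
  by move=> m; rewrite Dh; exists m.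
by move=> d; rewrite Dh => -[m _ <-]; exists m.
Qed.

Lemma dir2 : S1 (BOmega X) (BOmega X) -> S1 (DX X) (DX X).
Proof.
move=> H s Hs.
have [h [hD hsurj]] := DX_enum (Hs 0%N).
have [z Hz] : {z : nat -> FT & forall n, s n (z n)}.
  by apply: choice => n; apply: DX_nonempty.
have sB : forall n, s n `<=` BX X by move=> n; case: (Hs n).
have key : forall c : nat * nat, exists e : nat -> FT,
    (forall j, s (pickle (c, j)) (e j)) /\
    (forall F, finite_set F -> exists j, box (h c.1) F (c.2.+1%:R^-1) (e j)).
  move=> [m k] /=.
  set r : R := k.+1%:R^-1.
  have r0 : 0 < r by rewrite invr_gt0.
  pose N (j : nat) := pickle ((m, k), j).
  pose A (g : FT) := [set x : P | `|g x - h m x| < r].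
  have [[j [g [sg Ag]]] | nA] := pselect (exists (j : nat) (g : FT), s (N j) g /\ A g = setT).
    exists (fun j' => if j' == j then g else z (N j')); split.
      move=> j'; case: eqP => [->|_]; [exact: sg | exact: Hz].
    move=> F _; exists j; rewrite eqxx => x Fx.
    have : A g x by rewrite Ag.
    done.
  pose V j : set (set P) := A @` s (N j).
  have VB : forall j, BOmega X (V j).
    move=> j.
    have cov : forall F, finite_set F -> exists2 B, V j B & F `<=` B.
      move=> F fF.
      have [_ _ Hd] := (DXP (s (N j))).1 (Hs (N j)).
      have [d sd bd] := Hd (h m) (sB _ _ (hD m)) F r fF r0.
      exists (A d); first by exists d.
      move=> x Fx; exact: bd x Fx.
    split; first split.
    - apply/seteqP; split => // x _.
      have [B VB Bx] := cov [set x] (finite_set1 x).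
      by exists B => //; apply: Bx.
    - by move=> [g sg Ag]; apply: nA; exists j, g.
    - exact: cov.
    - apply: card_le_trans (card_image_le _ _) _.
      by case: (Hs (N j)).
    - by move=> _ [g sg <-]; apply: BX_abs; [apply: sB sg | apply: sB (hD m)].
  have [b [bV bO]] := H V VB.
  have : forall j, exists g, s (N j) g /\ A g = b j.
    by move=> j; case: (bV j) => g sg Ag; exists g.
  move=> /choice [e He].
  exists e; split; first by move=> j; case: (He j).
  move=> F fF.
  case: bO => [[_ _ cov] _ _].
  have [B [j _ bj] FB] := cov F fF.
  exists j => x Fx.
  have := FB x Fx; rewrite -bj.
  by case: (He j) => _ <-.
have [E HE] := choice key.
pose b n := match (pickle_inv n : option ((nat * nat) * nat)) with
  | Some t => E t.1 t.2 | None => z n end.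
have sb : forall n, s n (b n).
  move=> n; rewrite /b.
  have := @pickle_invK ((nat * nat) * nat)%type n.
  case: (pickle_inv n : option ((nat * nat) * nat)) => [t|] /=; last first.
    move=> _; exact: Hz.
  move=> Et; rewrite -Et.
  case: t Et => c j /= _; by case: (HE c) => + _; apply.
exists b; split; first exact: sb.
apply/DXP; split.
- by move=> _ [n _ <-]; apply: (sB n); apply: sb.
- apply: card_le_trans (card_image_le _ _) _; exact: countableP.
- move=> f bf F e fF e0.
  have e20 : 0 < e / 2 by rewrite divr_gt0.
  have [_ _ Hd0] := (DXP (s 0%N)).1 (Hs 0%N).
  have [d sd bd] := Hd0 f bf F (e / 2) fF e20.
  have [m hm] := hsurj d sd.
  pose k := Num.Def.trunc ((e / 2)^-1).
  have kr : k.+1%:R^-1 < e / 2.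
    rewrite -[e / 2]invrK ltf_pV2 ?posrE ?invr_gt0 //.
    exact: truncnS_gt.
  have [j bj] := (HE (m, k)).2 F fF.
  exists (b (pickle ((m, k), j))).
    by exists (pickle ((m, k), j)).
  have -> : b (pickle ((m, k), j)) = E (m, k) j.
    by rewrite /b (pickleK_inv ((m, k), j)).
  move=> x Fx.
  have h1 := bj x Fx.
  have h2 := bd x Fx; rewrite -hm in h2.
  rewrite (splitr e); apply: le_lt_trans (ler_distD (h m x) _ _) _.
  exact: ltrD (lt_trans h1 kr) h2.
Qed.

Definition step (l : seq (rat * rat * rat)) (y : R) : R :=
  foldr (fun t acc => if (ratr t.1.1 < y) && (y < ratr t.1.2) then ratr t.2 else acc) 0 l.

Lemma step_borel l (O : set R) : borelR (step l @^-1` O).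
Proof.
elim: l => [|t l IH].
  exact: (bR_cst (O 0)).
have -> : step (t :: l) @^-1` O =
   ([set y | ratr t.1.1 < y] `&` [set y | y < ratr t.1.2] `&` (fun _ => O (ratr t.2)))
   `|` (~` ([set y | ratr t.1.1 < y] `&` [set y | y < ratr t.1.2]) `&` step l @^-1` O).
  apply/seteqP; split => y; rewrite /preimage /=.
    case: ifPn => [/andP [h1 h2] Oq | hn Ol].
      by left.
    right; split => // -[h1 h2]; move: hn; rewrite h1 h2.
    done.
  case => [[[h1 h2] Oq] | [hn Ol]].
    by rewrite h1 h2.
  case: ifPn => // /andP [h1 h2].
  by exfalso; apply: hn.
apply: bRU; apply: bRI => //.
- apply: bRI; apply: bR_open; [exact: open_gt | exact: open_lt].
- exact: bR_cst.
- apply: bRC; apply: bRI; apply: bR_open; [exact: open_gt | exact: open_lt].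
Qed.

Definition phi (A : set P) (l : seq (rat * rat * rat)) : FT :=
  fun x => if `[< A x >] then step l (proj1_sig x) else 0.

Lemma phi_BX A l : borelX X A -> BX X (phi A l).
Proof.
move=> bA U oU.
have -> : phi A l @^-1` U = (A `&` (fun x : P => (step l @^-1` U) (proj1_sig x)))
   `|` (~` A `&` (fun _ => U 0)).
  apply/seteqP; split => x; rewrite /phi /preimage /=.
    by case: asboolP => Ax Ux; [left | right].
  by case => -[Ax Ux]; case: asboolP.
apply: bXU; apply: bXI => //.
- exact: bX_pre (step_borel l U).
- exact: bXC.
- exact: bX_cst.
Qed.

Lemma val_inj_pts (x y : P) : proj1_sig x = proj1_sig y -> x = y.
Proof.
case: x => a pa; case: y => b pb /= eab.
move: pa pb; rewrite eab => pa pb.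
by congr exist; exact: Prop_irrelevance.
Qed.

Lemma sep (F : set R) x : finite_set F -> ~ F x ->
  exists2 d, 0 < d & forall y, F y -> d <= `|y - x|.
Proof.
move: F; apply: (@fin_ind _ (fun F => ~ F x -> exists2 d, 0 < d & forall y, F y -> d <= `|y - x|)).
  by move=> _; exists 1 => //.
move=> F z _ IH nzF.
have [d d0 Hd] : exists2 d, 0 < d & forall y, F y -> d <= `|y - x|.
  by apply: IH => Fx; apply: nzF; right.
have zx : z != x by apply/eqP => zx; apply: nzF; left.
exists (Num.min d `|z - x|).
  by rewrite lt_min d0 normr_gt0 subr_eq0.
move=> y [->|Fy].
  by rewrite ge_min lexx orbT.
by rewrite ge_min Hd.
Qed.

Lemma interp (F : set P) (f : P -> R) e : finite_set F -> 0 < e ->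
  exists l, forall x, F x -> `|step l (proj1_sig x) - f x| < e.
Proof.
move=> fF e0; move: F fF.
apply: (@fin_ind _ (fun F => exists l, forall x, F x -> `|step l (proj1_sig x) - f x| < e)).
  by exists [::].
move=> F x fF [l Hl].
have [Fx|nFx] := pselect (F x).
  by exists l => y [->|Fy]; apply: Hl.
have nimg : ~ ((@proj1_sig R X) @` F) (proj1_sig x).
  by move=> [y Fy yx]; apply: nFx; rewrite -(@val_inj_pts y x yx).
have [d d0 Hd] := sep (proj1_sig x) (@finite_image _ _ F (@proj1_sig R X) fF) nimg.
have ax : proj1_sig x - d < proj1_sig x by rewrite ltrBlDr ltrDl.
have [a] := @rat_in_itvoo R (proj1_sig x - d) (proj1_sig x) ax.
rewrite in_itv /= => /andP [a1 a2].
have bx : proj1_sig x < proj1_sig x + d by rewrite ltrDl.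
have [b] := @rat_in_itvoo R (proj1_sig x) (proj1_sig x + d) bx.
rewrite in_itv /= => /andP [b1 b2].
have qx : f x - e < f x + e by rewrite ltrD2l gtrN.
have [q] := @rat_in_itvoo R (f x - e) (f x + e) qx.
rewrite in_itv /= => qe.
exists ((a, b, q) :: l) => y [->|Fy] /=.
  by rewrite a2 b1 /= distrC ltr_distlC.
have -> : (ratr a < proj1_sig y) && (proj1_sig y < ratr b) = false.
  apply/negbTE/negP => /andP [ya yb].
  have := Hd (proj1_sig y) (ex_intro2 _ _ y Fy erefl).
  apply/negP; rewrite -ltNge distrC ltr_distlC.
  apply/andP; split; [exact: lt_trans a1 ya | exact: lt_trans yb b2].
exact: Hl.
Qed.

Lemma dir1 : S1 (DX X) (DX X) -> S1 (BOmega X) (BOmega X).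
Proof.
move=> H U HU.
pose D n := [set phi p.1 p.2 | p in (U n) `*` [set: seq (rat * rat * rat)]].
have DD : forall n, DX X (D n).
  move=> n; case: (HU n) => [[_ nT cov] cU bU].
  apply/DXP; split.
  - by move=> _ [[A l] [/= UA _] <-]; apply: phi_BX; apply: bU.
  - apply: card_le_trans (card_image_le _ _) _.
    apply: countableX => //; exact: countableP.
  - move=> f _ F e fF e0.
    have [A UA FA] := cov F fF.
    have [l Hl] := @interp F f e fF e0.
    exists (phi A l); first by exists (A, l).
    move=> x Fx; rewrite /phi asboolT; last exact: FA.
    exact: Hl.
have [d [dD dO]] := H D DD.
have : forall n, exists A, U n A /\ exists l, d n = phi A l.
  move=> n; case: (dD n) => -[A l] [/= UA _] dn.
  by exists A; split => //; exists l.
move=> /choice [b Hb].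
exists b; split; first by move=> n; case: (Hb n).
have cov : forall F, finite_set F -> exists2 B, range b B & F `<=` B.
  move=> F fF.
  have [_ _ Hd] := (DXP _).1 dO.
  have h20 : (0 : R) < 1 / 2 by rewrite divr_gt0.
  have [g [n _ <-] bg] := Hd (fun _ => 1) (BX_cst X 1) F (1 / 2) fF h20.
  exists (b n); first by exists n.
  move=> x Fx; have := bg x Fx.
  case: (Hb n) => _ [l ->]; rewrite /phi.
  case: asboolP => // _.
  rewrite sub0r normrN normr1 => h.
  have h2 : (1 : R) / 2 < 1 by rewrite ltr_pdivrMr // mul1r ltr1n.
  by have := lt_trans h h2; rewrite ltxx.
split; first split.
- apply/seteqP; split => // x _.
  have [B Bb Bx] := cov [set x] (finite_set1 x).
  by exists B => //; apply: Bx.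
- move=> [n _ bn]; case: (Hb n) => Ub _; case: (HU n) => [[_ nT _] _ _].
  by apply: nT; rewrite -bn.
- exact: cov.
- apply: card_le_trans (card_image_le _ _) _; exact: countableP.
- move=> _ [n _ <-]; case: (HU n) => _ _ bU; apply: bU.
  by case: (Hb n).
Qed.

End Main.

Unset Implicit Arguments.

Theorem theorem3p3 (R : realType) (X : set R) :
  S1 (DX X) (DX X) <-> S1 (BOmega X) (BOmega X).
Proof. by split; [exact: dir1 | exact: dir2]. Qed.
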